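(* Let $X\colon\mathcal H\leftarrow\mathcal G$ be a groupoid correspondence, let $V_1,V_2\subseteq X$, $W\subseteq\mathcal G$, $Z\subseteq\mathcal H$ be slices, and let $\xi\in C_c(V_1)$, $\eta\in C_c(V_2)$, $\gamma\in C_c(W)$, $\zeta\in C_c(Z)$ (extended by zero). Then $V_1W=\{xg:x\in V_1,g\in W,s(x)=r(g)\}\subseteq X$, $\langle V_1|V_2\rangle=\{\langle x_1|x_2\rangle:x_1\in V_1,x_2\in V_2,p(x_1)=p(x_2)\}\subseteq\mathcal G$ and $ZV_1=\{hx:h\in Z,x\in V_1,s(h)=r(x)\}\subseteq X$ are slices. For $y\in V_1W$ there are unique $x\in V_1$, $g\in W$ with $xg=y$, and $\xi*\gamma\in C_c(V_1W)$ with $(\xi*\gamma)(y)=\xi(x)\gamma(g)$. For $g\in\langle V_1|V_2\rangle$ there are unique $x_1\in V_1$, $x_2\in V_2$ with $g=\langle x_1|x_2\rangle$, and $\langle\xi|\eta\rangle\in C_c(\langle V_1|V_2\rangle)$ with $\langle\xi|\eta\rangle(g)=\overline{\xi(x_1)}\eta(x_2)$. For $y\in ZV_1$ there are unique $h\in Z$, $x\in V_1$ with $y=hx$, and $\zeta*\xi\in C_c(ZV_1)$ with $(\zeta*\xi)(y)=\zeta(h)\xi(x)$.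
   Context: Groupoids are étale ($r,s$ local homeomorphisms, continuous multiplication and inversion) with Hausdorff locally compact object space. A groupoid correspondence $X\colon\mathcal H\leftarrow\mathcal G$: space with commuting continuous left $\mathcal H$-action (anchor $r$) and right $\mathcal G$-action (anchor $s$), $s$ a local homeomorphism, right action free and proper. $p\colon X\to X/\mathcal G$ is the orbit projection; for $p(x_1)=p(x_2)$, $\langle x_1|x_2\rangle$ is the unique $g\in\mathcal G$ with $s(x_1)=r(g)$, $x_2=x_1g$. A slice of $\mathcal G$ is an open $V\subseteq\mathcal G$ on which $s$ and $r$ are injective; a slice of $X$ is an open $V\subseteq X$ on which $s$ and $p$ are injective. The operations are $\xi*\gamma(x)=\sum_{g\in\mathcal G^{s(x)}}\xi(xg)\gamma(g^{-1})$, $\langle\xi|\eta\rangle(g)=\sum_{x:\,s(x)=r(g)}\overline{\xi(x)}\eta(xg)$, $\zeta*\xi(x)=\sum_{h\in\mathcal H^{r(x)}}\zeta(h)\xi(h^{-1}x)$, where $\mathcal G^{y}=r^{-1}(y)$. *)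

(* Defs.v *)
From HB Require Import structures.
From mathcomp Require Import all_boot all_order all_algebra.
From mathcomp Require Import all_classical all_reals all_analysis.
From mathcomp Require Import complex.
Import Order.TTheory GRing.Theory Num.Theory.
Import numFieldTopology.Exports.

Set Implicit Arguments.
Unset Strict Implicit.
Unset Printing Implicit Defensive.

Local Open Scope classical_set_scope.
Local Open Scope ring_scope.

(* f is a local homeomorphism: continuous, and every point has an open
   neighbourhood U on which f is injective and open (so f(U) is open and
   f|_U : U -> f(U) is a homeomorphism). *)
Definition local_homeo (S T : topologicalType) (f : S -> T) : Prop :=
  continuous f /\
  forall x, exists U : set S,
    [/\ open U, U x,
        (forall a b, U a -> U b -> f a = f b -> a = b) &
        (forall W : set S, open W -> W `<=` U -> open (f @` W))].

(* Etale groupoid with Hausdorff locally compact object cspace.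
   Multiplication gmul g h is meaningful when gsrc g = grng h. *)
Record etale_groupoid := EtaleGroupoid {
  garr : topologicalType;
  gobj : topologicalType;
  grng : garr -> gobj;
  gsrc : garr -> gobj;
  gmul : garr -> garr -> garr;
  ginv : garr -> garr;
  gunit : gobj -> garr;
  grng_mul : forall g h, gsrc g = grng h -> grng (gmul g h) = grng g;
  gsrc_mul : forall g h, gsrc g = grng h -> gsrc (gmul g h) = gsrc h;
  gmulA : forall g h k, gsrc g = grng h -> gsrc h = grng k ->
    gmul (gmul g h) k = gmul g (gmul h k);
  grng_unit : forall x, grng (gunit x) = x;
  gsrc_unit : forall x, gsrc (gunit x) = x;
  gmul_unitl : forall g, gmul (gunit (grng g)) g = g;
  gmul_unitr : forall g, gmul g (gunit (gsrc g)) = g;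
  grng_inv : forall g, grng (ginv g) = gsrc g;
  gsrc_inv : forall g, gsrc (ginv g) = grng g;
  gmul_invr : forall g, gmul g (ginv g) = gunit (grng g);
  gmul_invl : forall g, gmul (ginv g) g = gunit (gsrc g);
  obj_hausdorff : hausdorff_space gobj;
  obj_locally_compact : locally_compact [set: gobj];
  grng_local_homeo : local_homeo grng;
  gsrc_local_homeo : local_homeo gsrc;
  gmul_cont : {within [set p : garr * garr | gsrc p.1 = grng p.2],
                 continuous (fun p => gmul p.1 p.2)};
  ginv_cont : continuous ginv;
  gunit_cont : continuous gunit
}.

Record groupoid_corr (H G : etale_groupoid) := GroupoidCorr {
  cspace : topologicalType;
  anc_r : cspace -> gobj H;
  anc_s : cspace -> gobj G;
  lact : garr H -> cspace -> cspace;   (* h x, defined when gsrc h = anc_r x *)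
  ract : cspace -> garr G -> cspace;   (* x g, defined when anc_s x = grng g *)
  anc_r_cont : continuous anc_r;
  anc_s_local_homeo : local_homeo anc_s;
  anc_r_lact : forall h x, gsrc h = anc_r x -> anc_r (lact h x) = grng h;
  anc_s_lact : forall h x, gsrc h = anc_r x -> anc_s (lact h x) = anc_s x;
  lact_unit : forall x, lact (gunit (anc_r x)) x = x;
  lact_mul : forall h k x, gsrc h = grng k -> gsrc k = anc_r x ->
    lact (gmul h k) x = lact h (lact k x);
  anc_s_ract : forall x g, anc_s x = grng g -> anc_s (ract x g) = gsrc g;
  anc_r_ract : forall x g, anc_s x = grng g -> anc_r (ract x g) = anc_r x;
  ract_unit : forall x, ract x (gunit (anc_s x)) = x;
  ract_mul : forall x g k, anc_s x = grng g -> gsrc g = grng k ->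
    ract x (gmul g k) = ract (ract x g) k;
  lact_ract : forall h x g, gsrc h = anc_r x -> anc_s x = grng g ->
    lact h (ract x g) = ract (lact h x) g;
  lact_cont : {within [set p : garr H * cspace | gsrc p.1 = anc_r p.2],
                 continuous (fun p => lact p.1 p.2)};
  ract_cont : {within [set p : cspace * garr G | anc_s p.1 = grng p.2],
                 continuous (fun p => ract p.1 p.2)};
  ract_free : forall x g, anc_s x = grng g -> ract x g = x -> g = gunit (anc_s x);
  ract_proper : forall K : set (cspace * cspace), compact K ->
    compact ([set p : cspace * garr G | anc_s p.1 = grng p.2] `&`
             (fun p => (p.1, ract p.1 p.2)) @^-1` K)
}.

Arguments cspace {H G}.
Arguments anc_r {H G}.
Arguments anc_s {H G}.
Arguments lact {H G}.
Arguments ract {H G}.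

Definition Cplx (R : realType) : numClosedFieldType := R[i].

Section Defs.
Variables (H G : etale_groupoid) (X : groupoid_corr H G).

(* p(x1) = p(x2), p : X -> X/G the orbit projection *)
Definition same_orbit (x1 x2 : cspace X) : Prop :=
  exists g, anc_s X x1 = grng g /\ x2 = ract X x1 g.

(* g = <x1|x2> : s(x1) = r(g) and x2 = x1 g *)
Definition bracket_rel (x1 x2 : cspace X) (g : garr G) : Prop :=
  anc_s X x1 = grng g /\ x2 = ract X x1 g.

Definition slice_arr (K : etale_groupoid) (V : set (garr K)) : Prop :=
  [/\ open V,
      (forall a b, V a -> V b -> gsrc a = gsrc b -> a = b) &
      (forall a b, V a -> V b -> grng a = grng b -> a = b)].

Definition slice_sp (V : set (cspace X)) : Prop :=
  [/\ open V,
      (forall a b, V a -> V b -> anc_s X a = anc_s X b -> a = b) &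
      (forall a b, V a -> V b -> same_orbit a b -> a = b)].

Definition rprod (V : set (cspace X)) (W : set (garr G)) : set (cspace X) :=
  [set y | exists x g, [/\ V x, W g, anc_s X x = grng g & y = ract X x g]].

Definition bracket_set (V1 V2 : set (cspace X)) : set (garr G) :=
  [set g | exists x1 x2, [/\ V1 x1, V2 x2 & bracket_rel x1 x2 g]].

Definition lprod (Z : set (garr H)) (V : set (cspace X)) : set (cspace X) :=
  [set y | exists h x, [/\ Z h, V x, gsrc h = anc_r X x & y = lact X h x]].

Variable R : realType.

Definition Cc_on (T : topologicalType) (V : set T) (f : T -> Cplx R) : Prop :=
  [/\ (forall x, ~ V x -> f x = 0),
      {within V, continuous f} &
      exists K : set T, [/\ compact K, K `<=` V & forall x, f x != 0 -> K x]].

Definition conv_r (xi : cspace X -> Cplx R) (gam : garr G -> Cplx R) : cspace X -> Cplx R :=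
  fun x => \sum_(g \in [set g : garr G | grng g = anc_s X x])
             xi (ract X x g) * gam (ginv g).

Definition cinner (xi eta : cspace X -> Cplx R) : garr G -> Cplx R :=
  fun g => \sum_(x \in [set x : cspace X | anc_s X x = grng g])
             (xi x)^* * eta (ract X x g).

Definition conv_l (zet : garr H -> Cplx R) (xi : cspace X -> Cplx R) : cspace X -> Cplx R :=
  fun x => \sum_(h \in [set h : garr H | grng h = anc_r X x])
             zet h * xi (lact X (ginv h) x).

End Defs.

Arguments slice_arr {K}.

(* Main.v *)
Require Import Defs.
From HB Require Import structures.
From mathcomp Require Import all_boot all_order all_algebra.
From mathcomp Require Import all_classical all_reals all_analysis.
From mathcomp Require Import complex.
Import Order.TTheory GRing.Theory Num.Theory.
Import numFieldTopology.Exports numFieldNormedType.Exports.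
Local Open Scope classical_set_scope.
Local Open Scope ring_scope.
Set Implicit Arguments.
Unset Strict Implicit.
Unset Printing Implicit Defensive.

Section Topo.

Lemma lh_open (S T : topologicalType) (f : S -> T) :
  local_homeo f -> forall O, open O -> open (f @` O).
Proof.
move=> [_ lh] O oO; rewrite openE => _ [a Oa <-].
have [U [oU Ua injU opU]] := lh a.
have : open (f @` (O `&` U)) by apply: opU; [exact: openI | exact: subIsetr].
move=> oi; apply: (@filterS _ _ _ (f @` (O `&` U))).
  by move=> _ [b [Ob _] <-]; exists b.
by apply: open_nbhs_nbhs; split => //; exists a.
Qed.

Definition linv (S T : topologicalType) (f : S -> T) (W : set S) (a : S) (t : T) : S :=
  xget a [set b | W b /\ f b = t].

Lemma linv_id (S T : topologicalType) (f : S -> T) (W : set S) a b :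
  (forall x y, W x -> W y -> f x = f y -> x = y) -> W b -> linv f W a (f b) = b.
Proof.
move=> inj Wb; rewrite /linv.
have [] : [set c | W c /\ f c = f b] (xget a [set c | W c /\ f c = f b]).
  by apply: xgetPex; exists b.
by move=> Wc fc; apply: inj.
Qed.

Lemma linv_near (S T : topologicalType) (f : S -> T) (W : set S) a :
  local_homeo f -> open W -> W a ->
  \forall t \near f a, W (linv f W a t) /\ f (linv f W a t) = t.
Proof.
move=> lh oW Wa; apply: (@filterS _ _ _ (f @` W)).
  move=> t [b Wb <-]; rewrite /linv.
  have : [set c | W c /\ f c = f b] (xget a [set c | W c /\ f c = f b]).
    by apply: xgetPex; exists b.
  by [].
by apply: open_nbhs_nbhs; split; [exact: lh_open | exists a].
Qed.

Lemma linv_cont (S T : topologicalType) (f : S -> T) (W : set S) a :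
  local_homeo f -> open W -> W a ->
  (forall x y, W x -> W y -> f x = f y -> x = y) ->
  linv f W a @ f a --> a.
Proof.
move=> lh oW Wa inj N; rewrite nbhsE => -[N' [oN' N'a] N'N].
have [U [oU Ua injU opU]] := lh.2 a.
have oO : open (f @` (N' `&` W `&` U)).
  by apply: opU; [apply: openI => //; exact: openI | exact: subIsetr].
rewrite nbhs_simpl /=; apply: (@filterS _ _ _ (f @` (N' `&` W `&` U))).
  move=> _ [b [[N'b Wb] _] <-]; rewrite /= linv_id //; exact: N'N.
by apply: open_nbhs_nbhs; split => //; exists a.
Qed.

Lemma within_comp (T S U : topologicalType) (A : set S) (f : S -> U) (p : T -> S) (x : T) :
  {within A, continuous f} -> A (p x) -> p @ x --> p x ->
  (\forall y \near x, A (p y)) -> (f \o p) @ x --> f (p x).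
Proof.
move=> /subspace_continuousP hf Apx cp nA.
apply: cvg_trans (hf _ Apx).
have : p @ x --> within A (nbhs (p x)).
  move=> P /= wP; rewrite nbhs_simpl /=.
  have := cp _ wP; rewrite nbhs_simpl /= => h.
  by near=> y; apply: (near h y) => //; apply: (near nA y).
by move=> h P /h.
Unshelve. all: by end_near.
Qed.

End Topo.

Section Grp.
Variable K : etale_groupoid.
Implicit Types g h : garr K.

Lemma ginvK g : ginv (ginv g) = g.
Proof.
have e1 : g = gmul (gmul (ginv (ginv g)) (ginv g)) g.
  by rewrite gmul_invl gsrc_inv gmul_unitl.
rewrite [RHS]e1 gmulA ?gsrc_inv ?grng_inv // gmul_invl.
have -> : gsrc g = gsrc (ginv (ginv g)) by rewrite gsrc_inv grng_inv.
by rewrite gmul_unitr.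
Qed.

Lemma gmul_cancel g h k : gsrc g = grng h -> gsrc g = grng k ->
  gmul g h = gmul g k -> h = k.
Proof.
move=> e1 e2 e.
have : gmul (ginv g) (gmul g h) = gmul (ginv g) (gmul g k) by rewrite e.
rewrite -!gmulA ?gsrc_inv ?grng_inv // gmul_invl {1}e1 gmul_unitl e2 gmul_unitl; by [].
Qed.

Lemma gmul_cancelr g h k : gsrc h = grng g -> gsrc k = grng g ->
  gmul h g = gmul k g -> h = k.
Proof.
move=> e1 e2 e.
have : gmul (gmul h g) (ginv g) = gmul (gmul k g) (ginv g) by rewrite e.
rewrite !gmulA ?grng_inv // gmul_invr -{1}e1 gmul_unitr -e2 gmul_unitr; by [].
Qed.

End Grp.

Section Corr.
Variables (H G : etale_groupoid) (X : groupoid_corr H G).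
Implicit Types (x y : cspace X) (g : garr G) (h : garr H).

Lemma ractK x g : anc_s X x = grng g -> ract X (ract X x g) (ginv g) = x.
Proof.
move=> e; rewrite -ract_mul ?grng_inv // gmul_invr -e ract_unit //.
Qed.

Lemma lactK x h : gsrc h = anc_r X x -> lact X (ginv h) (lact X h x) = x.
Proof.
move=> e; rewrite -lact_mul ?gsrc_inv // gmul_invl e lact_unit //.
Qed.

Lemma ract_inj x g k : anc_s X x = grng g -> anc_s X x = grng k ->
  ract X x g = ract X x k -> g = k.
Proof.
move=> e1 e2 e.
have sgk : gsrc g = gsrc k by rewrite -(anc_s_ract e1) -(anc_s_ract e2) e.
have : ract X x (gmul k (ginv g)) = x.
  by rewrite ract_mul ?grng_inv // -e ractK.
move/ract_free => /(_ _); rewrite ?grng_mul ?grng_inv // => /(_ e2) hk.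
apply: (@gmul_cancelr _ (ginv g)); rewrite ?grng_inv //.
by rewrite hk gmul_invr e1.
Qed.

Lemma lact_inj x y h : gsrc h = anc_r X x -> gsrc h = anc_r X y ->
  lact X h x = lact X h y -> x = y.
Proof.
by move=> e1 e2 e; rewrite -(lactK e1) -(lactK e2) e.
Qed.

Lemma same_orbit_sym x y : same_orbit x y -> same_orbit y x.
Proof.
move=> [g [e ->]]; exists (ginv g); split; first by rewrite anc_s_ract // grng_inv.
by rewrite ractK.
Qed.

Lemma same_orbit_trans x y z : same_orbit x y -> same_orbit y z -> same_orbit x z.
Proof.
move=> [g [e ->]] [k [e' ->]]; exists (gmul g k).
rewrite anc_s_ract // in e'.
by rewrite grng_mul // ract_mul.
Qed.

Lemma same_orbit_ract x g : anc_s X x = grng g -> same_orbit x (ract X x g).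
Proof. by move=> e; exists g. Qed.

End Corr.

Lemma closed_fiber (A B C : topologicalType) (f : A -> C) (g : B -> C) :
  hausdorff_space C -> continuous f -> continuous g ->
  closed [set p : A * B | f p.1 = g p.2].
Proof.
move=> hC cf cg [a b] clp; apply: hC => P Q nP nQ.
have nP' : nbhs a (f @^-1` P) by exact: cf.
have nQ' : nbhs b (g @^-1` Q) by exact: cg.
have : nbhs (a, b) (f @^-1` P `*` g @^-1` Q).
  by exists (f @^-1` P, g @^-1` Q).
move=> /clp [[a' b'] [/= e [Pa Qb]]]; exists (f a'); split => //.
by rewrite e.
Qed.

Lemma compact_fiber (A B C : topologicalType) (f : A -> C) (g : B -> C) K1 K2 :
  hausdorff_space C -> continuous f -> continuous g -> compact K1 -> compact K2 ->
  compact ((K1 `*` K2) `&` [set p : A * B | f p.1 = g p.2]).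
Proof.
move=> hC cf cg c1 c2; apply: compact_closedI; first exact: compact_setX.
exact: closed_fiber.
Qed.
Lemma conj_cont (R : realType) : continuous (fun z : Cplx R => z^*).
Proof.
move=> z.
apply/(@cvgrPdist_lt _ _ _ _ (nbhs_filter z)) => e e0.
exists e => // t /=.
rewrite -rmorphB norm_conjC.
by [].
Qed.

Lemma mul_cont (R : realType) : continuous (fun p : Cplx R * Cplx R => p.1 * p.2).
Proof.
move=> p; apply: cvgM; [exact: cvg_fst | exact: cvg_snd].
Qed.

Lemma fsum_single (T : choiceType) (K : nmodType) (S : set T) (F : T -> K) a :
  S a -> (forall i, S i -> F i != 0 -> i = a) -> \sum_(i \in S) F i = F a.
Proof.
move=> Sa uniq; rewrite -(fsbig_widen [set a] S F) ?fsbig_set1 //.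
  by move=> i ->.
move=> i [Si nia] /=; apply/eqP; apply: contrapT => /negP nz; apply: nia.
by rewrite (uniq i Si nz).
Qed.

Lemma fsum_nz (T : choiceType) (K : nmodType) (S : set T) (F : T -> K) :
  \sum_(i \in S) F i != 0 -> exists i, S i /\ F i != 0.
Proof.
move=> nz; apply: contrapT => hn; move/eqP: nz; apply.
apply: fsbig1 => i Si; apply/eqP; apply: contrapT => /negP nz.
by apply: hn; exists i.
Qed.

Section CorrCont.
Variables (H G : etale_groupoid) (X : groupoid_corr H G).

Lemma ract_cvg (T : topologicalType) (u : T -> cspace X) (v : T -> garr G) t0 :
  u @ t0 --> u t0 -> v @ t0 --> v t0 ->
  (\forall t \near t0, anc_s X (u t) = grng (v t)) ->
  (fun t => ract X (u t) (v t)) @ t0 --> ract X (u t0) (v t0).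
Proof.
move=> cu cv nA.
have := @within_comp _ _ _ _ (fun p => ract X p.1 p.2) (fun t => (u t, v t)) t0 (@ract_cont _ _ X).
apply.

- exact: (nbhs_singleton nA).
- exact: cvg_pair.
- exact: nA.
Qed.

Lemma lact_cvg (T : topologicalType) (u : T -> garr H) (v : T -> cspace X) t0 :
  u @ t0 --> u t0 -> v @ t0 --> v t0 ->
  (\forall t \near t0, gsrc (u t) = anc_r X (v t)) ->
  (fun t => lact X (u t) (v t)) @ t0 --> lact X (u t0) (v t0).
Proof.
move=> cu cv nA.
have := @within_comp _ _ _ _ (fun p => lact X p.1 p.2) (fun t => (u t, v t)) t0 (@lact_cont _ _ X).
apply.

- exact: (nbhs_singleton nA).
- exact: cvg_pair.
- exact: nA.
Qed.

End CorrCont.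

Section Extra.
Variables (H G : etale_groupoid) (X : groupoid_corr H G).

Lemma ractKV x (k : garr G) : anc_s X x = gsrc k -> ract X (ract X x (ginv k)) k = x.
Proof. by move=> e; have := @ractK _ _ X x (ginv k); rewrite ginvK; apply; rewrite grng_inv. Qed.

Lemma lactKV x (h : garr H) : anc_r X x = grng h -> lact X h (lact X (ginv h) x) = x.
Proof. by move=> e; have := @lactK _ _ X x (ginv h); rewrite ginvK; apply; rewrite gsrc_inv. Qed.

End Extra.

Section Main.
Variables (R : realType) (H G : etale_groupoid) (X : groupoid_corr H G)
  (V1 V2 : set (cspace X)) (W : set (garr G)) (Z : set (garr H))
  (xi eta : cspace X -> Cplx R) (gam : garr G -> Cplx R) (zet : garr H -> Cplx R).
Hypotheses (sV1 : slice_sp V1) (sV2 : slice_sp V2) (sW : slice_arr W) (sZ : slice_arr Z).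

Hypotheses (cxi : Cc_on V1 xi) (ceta : Cc_on V2 eta) (cgam : Cc_on W gam) (czet : Cc_on Z zet).

Let cas : continuous (anc_s X) := (anc_s_local_homeo X).1.
Let car : continuous (anc_r X) := @anc_r_cont _ _ X.
Let cgs : continuous (@gsrc G) := (gsrc_local_homeo G).1.
Let cgr : continuous (@grng G) := (grng_local_homeo G).1.
Let chs : continuous (@gsrc H) := (gsrc_local_homeo H).1.
Let chr : continuous (@grng H) := (grng_local_homeo H).1.

Lemma rprod_open : open (rprod V1 W).
Proof.
case: sV1 => oV1 _ _; case: sW => oW sWs _.
rewrite openE => _ [x [g [V1x Wg e ->]]].
set y := ract X x g.
set psi := linv (@gsrc G) W g.
have sy : anc_s X y = gsrc g by rewrite /y anc_s_ract.
have npsi : \forall y' \near y, W (psi (anc_s X y')) /\ gsrc (psi (anc_s X y')) = anc_s X y'.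
  have := linv_near (gsrc_local_homeo G) oW Wg.
  rewrite -sy => h; have h2 := (@cas y _ h).
exact h2.
have psig : psi (gsrc g) = g by apply: linv_id.
have cpsi : (fun y' => psi (anc_s X y')) @ y --> psi (anc_s X y).
  apply: (cvg_comp (anc_s X) psi (@cas y)).
  rewrite sy psig; exact: linv_cont (gsrc_local_homeo G) oW Wg sWs.
have cq : (fun y' => ract X y' (ginv (psi (anc_s X y')))) @ y --> x.
  have -> : x = ract X y (ginv (psi (anc_s X y))) by rewrite sy psig /y ractK.
  apply: ract_cvg.
  - exact: cvg_id.
  - exact (cvg_comp _ (@ginv G) cpsi (@ginv_cont G _)).
  - by apply: filterS npsi => t [_ e']; rewrite grng_inv e'.
have nV1 : \forall y' \near y, V1 (ract X y' (ginv (psi (anc_s X y')))).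
  by apply: cq; apply: open_nbhs_nbhs; split.
rewrite /interior.
near=> y'.
have [Wp sp] : W (psi (anc_s X y')) /\ gsrc (psi (anc_s X y')) = anc_s X y' by near: y'.
exists (ract X y' (ginv (psi (anc_s X y')))), (psi (anc_s X y')); split => //.
- by near: y'.
- by rewrite anc_s_ract ?grng_inv ?gsrc_inv // sp.
- by rewrite ractKV.
Unshelve. all: by end_near.
Qed.

Lemma bracket_open : open (bracket_set V1 V2).
Proof.
case: sV1 => oV1 sV1s _; case: sV2 => oV2 _ _.
rewrite openE => g [x1 [x2 [V1x1 V2x2 [e ex2]]]].
set chi := linv (anc_s X) V1 x1.
have nchi : \forall g' \near g, V1 (chi (grng g')) /\ anc_s X (chi (grng g')) = grng g'.
  have := linv_near (anc_s_local_homeo X) oV1 V1x1.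
  rewrite e => h; have h2 := (@cgr g _ h); exact h2.
have chig : chi (grng g) = x1 by rewrite -e; apply: linv_id.
have cchi : (fun g' => chi (grng g')) @ g --> chi (grng g).
  apply: (cvg_comp (@grng G) chi (@cgr g)).
  rewrite chig -e; exact: linv_cont (anc_s_local_homeo X) oV1 V1x1 sV1s.
have cq : (fun g' => ract X (chi (grng g')) g') @ g --> x2.
  have -> : x2 = ract X (chi (grng g)) g by rewrite chig ex2.
  apply: ract_cvg.
  - exact: cchi.
  - exact: cvg_id.
  - by apply: filterS nchi => t [_ ->].
have nV2 : \forall g' \near g, V2 (ract X (chi (grng g')) g').
  by apply: cq; apply: open_nbhs_nbhs; split.
rewrite /interior; near=> g'.
have [V1c ec] : V1 (chi (grng g')) /\ anc_s X (chi (grng g')) = grng g' by near: g'.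
exists (chi (grng g')), (ract X (chi (grng g')) g'); split; [exact: V1c | by near: g' | by split].
Unshelve. all: by end_near.
Qed.

Lemma lprod_open : open (lprod Z V1).
Proof.
case: sV1 => oV1 _ _; case: sZ => oZ _ sZr.
rewrite openE => _ [h [x [Zh V1x e ->]]].
set y := lact X h x.
set psi := linv (@grng H) Z h.
have ry : anc_r X y = grng h by rewrite /y anc_r_lact.
have npsi : \forall y' \near y, Z (psi (anc_r X y')) /\ grng (psi (anc_r X y')) = anc_r X y'.
  have := linv_near (grng_local_homeo H) oZ Zh.
  rewrite -ry => h1; have h2 := (@car y _ h1); exact h2.
have psih : psi (grng h) = h by apply: linv_id.
have cpsi : (fun y' => psi (anc_r X y')) @ y --> psi (anc_r X y).
  apply: (cvg_comp (anc_r X) psi (@car y)).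
  rewrite ry psih; exact: linv_cont (grng_local_homeo H) oZ Zh sZr.
have cq : (fun y' => lact X (ginv (psi (anc_r X y'))) y') @ y --> x.
  have -> : x = lact X (ginv (psi (anc_r X y))) y by rewrite ry psih /y lactK.
  apply: lact_cvg.
  - exact (cvg_comp _ (@ginv H) cpsi (@ginv_cont H _)).
  - exact: cvg_id.
  - by apply: filterS npsi => t [_ e']; rewrite gsrc_inv e'.
have nV1 : \forall y' \near y, V1 (lact X (ginv (psi (anc_r X y'))) y').
  by apply: cq; apply: open_nbhs_nbhs; split.
rewrite /interior; near=> y'.
have [Zp rp] : Z (psi (anc_r X y')) /\ grng (psi (anc_r X y')) = anc_r X y' by near: y'.
exists (psi (anc_r X y')), (lact X (ginv (psi (anc_r X y'))) y'); split => //.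
- by near: y'.
- by rewrite anc_r_lact ?gsrc_inv ?grng_inv // rp.
- by rewrite lactKV.
Unshelve. all: by end_near.
Qed.

Lemma rprod_slice : slice_sp (rprod V1 W).
Proof.
case: sV1 => oV1 sV1s sV1o; case: sW => oW sWs sWr.
split; first exact: rprod_open.
- move=> _ _ [x [g [V1x Wg e ->]]] [x' [g' [V1x' Wg' e' ->]]].
  rewrite !anc_s_ract // => sg.
  have gg : g = g' by apply: sWs.
  subst g'; have -> // : x = x' by apply: sV1s; rewrite // e e'.
- move=> _ _ [x [g [V1x Wg e ->]]] [x' [g' [V1x' Wg' e' ->]]] so.
  have xx : x = x'.
    apply: sV1o => //; apply: same_orbit_trans (same_orbit_ract e) _.
    exact: same_orbit_trans so (same_orbit_sym (same_orbit_ract e')).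
  subst x'; have -> // : g = g' by apply: sWr; rewrite // -e -e'.
Qed.

Lemma bracket_slice : slice_arr (bracket_set V1 V2).
Proof.
case: sV1 => oV1 sV1s sV1o; case: sV2 => oV2 sV2s sV2o.
split; first exact: bracket_open.
- move=> g g' [x1 [x2 [V1x1 V2x2 [e ex2]]]] [x1' [x2' [V1x1' V2x2' [e' ex2']]]] sg.
  have xx2 : x2 = x2' by apply: sV2s; rewrite // ex2 ex2' !anc_s_ract.
  have xx1 : x1 = x1'.
    apply: sV1o => //; apply: same_orbit_trans (same_orbit_ract e) _.
    rewrite -ex2 xx2 ex2'; exact: same_orbit_sym (same_orbit_ract e').
  subst x1'; apply: (ract_inj e e'); by rewrite -ex2 -ex2'.
- move=> g g' [x1 [x2 [V1x1 V2x2 [e ex2]]]] [x1' [x2' [V1x1' V2x2' [e' ex2']]]] rg.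
  have xx1 : x1 = x1' by apply: sV1s; rewrite // e e'.
  subst x1'.
  have xx2 : x2 = x2'.
    apply: sV2o => //; rewrite ex2 ex2'.
    apply: same_orbit_trans (same_orbit_sym (same_orbit_ract e)) (same_orbit_ract e').
  apply: (ract_inj e e'); by rewrite -ex2 -ex2'.
Qed.

Lemma lprod_slice : slice_sp (lprod Z V1).
Proof.
case: sV1 => oV1 sV1s sV1o; case: sZ => oZ sZs sZr.
split; first exact: lprod_open.
- move=> _ _ [h [x [Zh V1x e ->]]] [h' [x' [Zh' V1x' e' ->]]].
  rewrite !anc_s_lact // => sx.
  have xx : x = x' by apply: sV1s.
  subst x'; have -> // : h = h' by apply: sZs; rewrite // e e'.
- move=> _ _ [h [x [Zh V1x e ->]]] [h' [x' [Zh' V1x' e' ->]]] [k [ek so]].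
  have hh : h = h'.
    apply: sZr => //.
    by rewrite -(anc_r_lact e) -(anc_r_lact e') so anc_r_ract.
  subst h'.
  rewrite anc_s_lact // in ek.
  rewrite -lact_ract // in so.
  have xx : x' = ract X x k.
    apply: (lact_inj e') => //; by rewrite anc_r_ract.
  have -> // : x = x' by apply: sV1o => //; rewrite xx; exact: same_orbit_ract.
Qed.

Lemma rprod_uniq y : rprod V1 W y -> exists! p : cspace X * garr G,
   [/\ V1 p.1, W p.2, anc_s X p.1 = grng p.2 & ract X p.1 p.2 = y].
Proof.
case: sV1 => _ sV1s _; case: sW => _ sWs _.
move=> [x [g [V1x Wg e ->]]]; exists (x, g); split => // -[x' g'] /= [V1x' Wg' e' eq].
have gg : g' = g by apply: sWs; rewrite // -(anc_s_ract e) -(anc_s_ract e') eq.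
subst g'; have xx : x' = x by apply: sV1s; rewrite // e e'.
by rewrite xx.
Qed.

Lemma bracket_uniq g : bracket_set V1 V2 g -> exists! p : cspace X * cspace X,
   [/\ V1 p.1, V2 p.2 & bracket_rel p.1 p.2 g].
Proof.
case: sV1 => _ sV1s _.
move=> [x1 [x2 [V1x1 V2x2 br]]]; exists (x1, x2); split => // -[x1' x2'] /= [V1' V2' [e' ex']].
case: br => e ex.
have xx : x1' = x1 by apply: sV1s; rewrite // e e'.
by rewrite ex ex' xx.
Qed.

Lemma lprod_uniq y : lprod Z V1 y -> exists! p : garr H * cspace X,
   [/\ Z p.1, V1 p.2, gsrc p.1 = anc_r X p.2 & lact X p.1 p.2 = y].
Proof.
case: sZ => _ _ sZr.
move=> [h [x [Zh V1x e ->]]]; exists (h, x); split => // -[h' x'] /= [Zh' V1x' e' eq].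
have hh : h' = h by apply: sZr; rewrite // -(anc_r_lact e) -(anc_r_lact e') eq.
subst h'; have xx : x' = x by apply: (lact_inj e' e).
by rewrite xx.
Qed.

Lemma conv_r_val x g : V1 x -> W g -> anc_s X x = grng g ->
  conv_r xi gam (ract X x g) = xi x * gam g.
Proof.
case: sV1 => _ sV1s _; case: sW => _ sWs _; case: cxi => zxi _ _; case: cgam => zgam _ _.
move=> V1x Wg e; rewrite /conv_r (fsum_single (a := ginv g)).
- by rewrite ractK // ginvK.
- by rewrite /= grng_inv anc_s_ract.
- move=> k /= rk nz.
  have gk : ginv k = g.
    apply: sWs => //.
    + apply: contrapT => nW; move: nz; by rewrite (zgam _ nW) mulr0 eqxx.
    + by rewrite gsrc_inv rk anc_s_ract.
  by rewrite -gk ginvK.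
Qed.

Lemma cinner_val x1 x2 g : V1 x1 -> V2 x2 -> bracket_rel x1 x2 g ->
  cinner xi eta g = (xi x1)^* * eta x2.
Proof.
case: sV1 => _ sV1s _; case: cxi => zxi _ _.
move=> V1x1 V2x2 [e ex]; rewrite /cinner (fsum_single (a := x1)).
- by rewrite ex.
- by [].
- move=> x /= sx nz.
  apply: sV1s => //; last by rewrite sx e.
  apply: contrapT => nV; move: nz; by rewrite (zxi _ nV) conjC0 mul0r eqxx.
Qed.

Lemma conv_l_val h x : Z h -> V1 x -> gsrc h = anc_r X x ->
  conv_l zet xi (lact X h x) = zet h * xi x.
Proof.
case: sZ => _ _ sZr; case: czet => zzet _ _.
move=> Zh V1x e; rewrite /conv_l (fsum_single (a := h)).
- by rewrite lactK.
- by rewrite /= anc_r_lact.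
- move=> k /= rk nz.
  apply: sZr => //; last by rewrite rk anc_r_lact.
  apply: contrapT => nZ; move: nz; by rewrite (zzet _ nZ) mul0r eqxx.
Qed.

Lemma nz_in (T : Type) (V : set T) (f : T -> Cplx R) :
  (forall x, ~ V x -> f x = 0) -> forall z, f z != 0 -> V z.
Proof. by move=> zf z nz; apply: contrapT => nV; move: nz; rewrite zf // eqxx. Qed.

Lemma mul_nz (a b : Cplx R) : a * b != 0 -> a != 0 /\ b != 0.
Proof. by rewrite mulf_eq0 negb_or => /andP. Qed.

Lemma at_cont (T : topologicalType) (V : set T) (f : T -> Cplx R) x :
  open V -> V x -> {within V, continuous f} -> f @ x --> f x.
Proof.
move=> oV Vx; rewrite continuous_open_subspace // => /(_ x (mem_set Vx)); exact.
Qed.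

Lemma Cc_rprod : Cc_on (rprod V1 W) (conv_r xi gam).
Proof.
have sV1' := sV1; have sW' := sW.
case: sV1' => oV1 sV1s _; case: sW' => oW sWs _.
case: cxi => zxi cnxi [K1 [cK1 K1V K1s]].
case: cgam => zgam cngam [K2 [cK2 K2W K2s]].
split.
- move=> y ny; rewrite /conv_r; apply: fsbig1 => k /= rk.
  apply/eqP; apply: contrapT => /negP /mul_nz [n1 n2]; apply: ny.
  exists (ract X y k), (ginv k); split.
  + exact: (nz_in zxi).
  + exact: (nz_in zgam).
  + by rewrite anc_s_ract // grng_inv.
  + by rewrite ractK.
- rewrite continuous_open_subspace; last exact: rprod_open.
  move=> _ /set_mem [x [g [V1x Wg e ->]]].
  set y := ract X x g.
  set psi := linv (@gsrc G) W g.
  have sy : anc_s X y = gsrc g by rewrite /y anc_s_ract.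
  have npsi : \forall y' \near y, W (psi (anc_s X y')) /\ gsrc (psi (anc_s X y')) = anc_s X y'.
    have := linv_near (gsrc_local_homeo G) oW Wg.
    rewrite -sy => h; have h2 := (@cas y _ h); exact h2.
  have psig : psi (gsrc g) = g by apply: linv_id.
  have cpsi : (fun y' => psi (anc_s X y')) @ y --> psi (anc_s X y).
    apply: (cvg_comp (anc_s X) psi (@cas y)).
    rewrite sy psig; exact: linv_cont (gsrc_local_homeo G) oW Wg sWs.
  have qy : ract X y (ginv (psi (anc_s X y))) = x by rewrite sy psig /y ractK.
  have cq : (fun y' => ract X y' (ginv (psi (anc_s X y')))) @ y --> ract X y (ginv (psi (anc_s X y))).
    apply: ract_cvg.
    + exact: cvg_id.
    + exact (cvg_comp _ (@ginv G) cpsi (@ginv_cont G _)).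
    + by apply: filterS npsi => t [_ e']; rewrite grng_inv e'.
  have nV1 : \forall y' \near y, V1 (ract X y' (ginv (psi (anc_s X y')))).
    by apply: cq; rewrite qy; apply: open_nbhs_nbhs; split.
  have neq : \forall y' \near y, conv_r xi gam y' =
      xi (ract X y' (ginv (psi (anc_s X y')))) * gam (psi (anc_s X y')).
    near=> y'.
    have [Wp sp] : W (psi (anc_s X y')) /\ gsrc (psi (anc_s X y')) = anc_s X y' by near: y'.
    have V1q : V1 (ract X y' (ginv (psi (anc_s X y')))) by near: y'.
    rewrite -{1}(@ractKV _ _ X y' (psi (anc_s X y'))) ?sp // conv_r_val //.
    by rewrite anc_s_ract ?grng_inv ?gsrc_inv ?sp.
  have neq' : \forall y' \near y, xi (ract X y' (ginv (psi (anc_s X y')))) * gam (psi (anc_s X y')) = conv_r xi gam y'.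
    by apply: filterS neq => t ->.
  apply: cvg_trans (near_eq_cvg neq') _.
  have -> : conv_r xi gam y = xi (ract X y (ginv (psi (anc_s X y)))) * gam (psi (anc_s X y)).
    by rewrite qy sy psig /y conv_r_val.
  apply: cvgM.
  + apply: (cvg_comp _ xi cq); rewrite qy; exact: (at_cont oV1 V1x cnxi).
  + apply: (cvg_comp _ gam cpsi); rewrite sy psig; exact: (at_cont oW Wg cngam).
- exists ((fun p => ract X p.1 p.2) @` ((K1 `*` K2) `&` [set p | anc_s X p.1 = grng p.2])).
  split.
  + apply: continuous_compact.
      apply: (continuous_subspaceW _ (@ract_cont _ _ X)); by move=> p [].
    exact: compact_fiber (@obj_hausdorff G) cas cgr cK1 cK2.
  + move=> _ [[x g] [[K1x K2g] /= e] <-]; exists x, g; split => //.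
    * exact: K1V.
    * exact: K2W.
  + move=> y /fsum_nz [k [/= rk /mul_nz [n1 n2]]].
    exists (ract X y k, ginv k); last by rewrite /= ractK.
    split; first split.
    * exact: K1s.
    * exact: K2s.
    * by rewrite /= anc_s_ract // grng_inv.
Unshelve. all: by end_near.
Qed.

Lemma conj_nz (a : Cplx R) : a^* != 0 -> a != 0.
Proof. by apply: contra => /eqP ->; rewrite conjC0. Qed.

Lemma Cc_bracket : Cc_on (bracket_set V1 V2) (cinner xi eta).
Proof.
have sV1' := sV1; have sV2' := sV2.
case: sV1' => oV1 sV1s _; case: sV2' => oV2 _ _.
case: cxi => zxi cnxi [K1 [cK1 K1V K1s]].
case: ceta => zeta cneta [K2 [cK2 K2V K2s]].
split.
- move=> g ng; rewrite /cinner; apply: fsbig1 => x /= sx.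
  apply/eqP; apply: contrapT => /negP /mul_nz [/conj_nz n1 n2]; apply: ng.
  exists x, (ract X x g); split => //.
  + exact: (nz_in zxi).
  + exact: (nz_in zeta).
- rewrite continuous_open_subspace; last exact: bracket_open.
  move=> g /set_mem [x1 [x2 [V1x1 V2x2 [e ex2]]]].
  set chi := linv (anc_s X) V1 x1.
  have nchi : \forall g' \near g, V1 (chi (grng g')) /\ anc_s X (chi (grng g')) = grng g'.
    have := linv_near (anc_s_local_homeo X) oV1 V1x1.
    rewrite e => h; have h2 := (@cgr g _ h); exact h2.
  have chig : chi (grng g) = x1 by rewrite -e; apply: linv_id.
  have cchi : (fun g' => chi (grng g')) @ g --> chi (grng g).
    apply: (cvg_comp (@grng G) chi (@cgr g)).
    rewrite chig -e; exact: linv_cont (anc_s_local_homeo X) oV1 V1x1 sV1s.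
  have cq : (fun g' => ract X (chi (grng g')) g') @ g --> ract X (chi (grng g)) g.
    apply: ract_cvg.
    + exact: cchi.
    + exact: cvg_id.
    + by apply: filterS nchi => t [_ ->].
  have qg : ract X (chi (grng g)) g = x2 by rewrite chig ex2.
  have nV2 : \forall g' \near g, V2 (ract X (chi (grng g')) g').
    by apply: cq; rewrite qg; apply: open_nbhs_nbhs; split.
  have neq : \forall g' \near g,
      (xi (chi (grng g')))^* * eta (ract X (chi (grng g')) g') = cinner xi eta g'.
    near=> g'.
    have [V1c ec] : V1 (chi (grng g')) /\ anc_s X (chi (grng g')) = grng g' by near: g'.
    have V2q : V2 (ract X (chi (grng g')) g') by near: g'.
    by rewrite (@cinner_val (chi (grng g')) (ract X (chi (grng g')) g')).
  apply: cvg_trans (near_eq_cvg neq) _.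
  have -> : cinner xi eta g = (xi (chi (grng g)))^* * eta (ract X (chi (grng g)) g).
    by rewrite qg chig (@cinner_val x1 x2).
  apply: cvgM.
  + apply: (cvg_comp (fun g' => xi (chi (grng g'))) (fun z => z^*)); last exact: conj_cont.
    apply: (cvg_comp _ xi cchi); rewrite chig; exact: (at_cont oV1 V1x1 cnxi).
  + apply: (cvg_comp _ eta cq); rewrite qg; exact: (at_cont oV2 V2x2 cneta).
- exists (snd @` ([set p | anc_s X p.1 = grng p.2] `&`
          (fun p => (p.1, ract X p.1 p.2)) @^-1` (K1 `*` K2))).
  split.
  + apply: continuous_compact.
      by apply: continuous_subspaceT => p; exact: cvg_snd.
    exact: ract_proper (compact_setX cK1 cK2).
  + move=> _ [[x g] [/= e [K1x K2xg]] <-] /=; exists x, (ract X x g); split => //.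
    * exact: K1V.
    * exact: K2V.
  + move=> g /fsum_nz [x [/= sx /mul_nz [/conj_nz n1 n2]]].
    exists (x, g) => //; split => //; split.
    * exact: K1s.
    * exact: K2s.
Unshelve. all: by end_near.
Qed.

Lemma Cc_lprod : Cc_on (lprod Z V1) (conv_l zet xi).
Proof.
have sV1' := sV1; have sZ' := sZ.
case: sV1' => oV1 _ _; case: sZ' => oZ _ sZr.
case: cxi => zxi cnxi [K1 [cK1 K1V K1s]].
case: czet => zzet cnzet [K2 [cK2 K2Z K2s]].
split.
- move=> y ny; rewrite /conv_l; apply: fsbig1 => h /= rh.
  apply/eqP; apply: contrapT => /negP /mul_nz [n1 n2]; apply: ny.
  exists h, (lact X (ginv h) y); split.
  + exact: (nz_in zzet).
  + exact: (nz_in zxi).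
  + by rewrite anc_r_lact ?gsrc_inv ?grng_inv.
  + by rewrite lactKV.
- rewrite continuous_open_subspace; last exact: lprod_open.
  move=> _ /set_mem [h [x [Zh V1x e ->]]].
  set y := lact X h x.
  set psi := linv (@grng H) Z h.
  have ry : anc_r X y = grng h by rewrite /y anc_r_lact.
  have npsi : \forall y' \near y, Z (psi (anc_r X y')) /\ grng (psi (anc_r X y')) = anc_r X y'.
    have := linv_near (grng_local_homeo H) oZ Zh.
    rewrite -ry => h1; have h2 := (@car y _ h1); exact h2.
  have psih : psi (grng h) = h by apply: linv_id.
  have cpsi : (fun y' => psi (anc_r X y')) @ y --> psi (anc_r X y).
    apply: (cvg_comp (anc_r X) psi (@car y)).
    rewrite ry psih; exact: linv_cont (grng_local_homeo H) oZ Zh sZr.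
  have qy : lact X (ginv (psi (anc_r X y))) y = x by rewrite ry psih /y lactK.
  have cq : (fun y' => lact X (ginv (psi (anc_r X y'))) y') @ y --> lact X (ginv (psi (anc_r X y))) y.
    apply: lact_cvg.
    + exact (cvg_comp _ (@ginv H) cpsi (@ginv_cont H _)).
    + exact: cvg_id.
    + by apply: filterS npsi => t [_ e']; rewrite gsrc_inv e'.
  have nV1 : \forall y' \near y, V1 (lact X (ginv (psi (anc_r X y'))) y').
    by apply: cq; rewrite qy; apply: open_nbhs_nbhs; split.
  have neq : \forall y' \near y,
      zet (psi (anc_r X y')) * xi (lact X (ginv (psi (anc_r X y'))) y') = conv_l zet xi y'.
    near=> y'.
    have [Zp rp] : Z (psi (anc_r X y')) /\ grng (psi (anc_r X y')) = anc_r X y' by near: y'.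
    have V1q : V1 (lact X (ginv (psi (anc_r X y'))) y') by near: y'.
    rewrite -[in RHS](@lactKV _ _ X y' (psi (anc_r X y'))) ?rp // conv_l_val //.
    by rewrite anc_r_lact ?gsrc_inv ?grng_inv ?rp.
  apply: cvg_trans (near_eq_cvg neq) _.
  have -> : conv_l zet xi y = zet (psi (anc_r X y)) * xi (lact X (ginv (psi (anc_r X y))) y).
    by rewrite qy ry psih /y conv_l_val.
  apply: cvgM.
  + apply: (cvg_comp _ zet cpsi); rewrite ry psih; exact: (at_cont oZ Zh cnzet).
  + apply: (cvg_comp _ xi cq); rewrite qy; exact: (at_cont oV1 V1x cnxi).
- exists ((fun p => lact X p.1 p.2) @` ((K2 `*` K1) `&` [set p | gsrc p.1 = anc_r X p.2])).
  split.
  + apply: continuous_compact.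
      apply: (continuous_subspaceW _ (@lact_cont _ _ X)); by move=> p [].
    exact: compact_fiber (@obj_hausdorff H) chs car cK2 cK1.
  + move=> _ [[h x] [[K2h K1x] /= e] <-]; exists h, x; split => //.
    * exact: K2Z.
    * exact: K1V.
  + move=> y /fsum_nz [h [/= rh /mul_nz [n1 n2]]].
    exists (h, lact X (ginv h) y); last by rewrite /= lactKV.
    split; first split.
    * exact: K2s.
    * exact: K1s.
    * by rewrite /= anc_r_lact ?gsrc_inv ?grng_inv.
Unshelve. all: by end_near.
Qed.

End Main.
Theorem lemma7p4 (R : realType) (H G : etale_groupoid) (X : groupoid_corr H G)
  (V1 V2 : set (cspace X)) (W : set (garr G)) (Z : set (garr H))
  (xi eta : cspace X -> Cplx R) (gam : garr G -> Cplx R) (zet : garr H -> Cplx R) :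
  slice_sp V1 -> slice_sp V2 -> slice_arr W -> slice_arr Z ->
  Cc_on V1 xi -> Cc_on V2 eta -> Cc_on W gam -> Cc_on Z zet ->
  (* the three products are slices *)
  (slice_sp (rprod V1 W) /\ slice_arr (bracket_set V1 V2) /\ slice_sp (lprod Z V1)) /\
  (* V1 W *)
  ((forall y, rprod V1 W y ->
      exists! p : cspace X * garr G,
        [/\ V1 p.1, W p.2, anc_s X p.1 = grng p.2 & ract X p.1 p.2 = y]) /\
   Cc_on (rprod V1 W) (conv_r xi gam) /\
   (forall x g, V1 x -> W g -> anc_s X x = grng g ->
      conv_r xi gam (ract X x g) = xi x * gam g)) /\
  (* <V1|V2> *)
  ((forall g, bracket_set V1 V2 g ->
      exists! p : cspace X * cspace X,
        [/\ V1 p.1, V2 p.2 & bracket_rel p.1 p.2 g]) /\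
   Cc_on (bracket_set V1 V2) (cinner xi eta) /\
   (forall x1 x2 g, V1 x1 -> V2 x2 -> bracket_rel x1 x2 g ->
      cinner xi eta g = (xi x1)^* * eta x2)) /\
  (* Z V1 *)
  ((forall y, lprod Z V1 y ->
      exists! p : garr H * cspace X,
        [/\ Z p.1, V1 p.2, gsrc p.1 = anc_r X p.2 & lact X p.1 p.2 = y]) /\
   Cc_on (lprod Z V1) (conv_l zet xi) /\
   (forall h x, Z h -> V1 x -> gsrc h = anc_r X x ->
      conv_l zet xi (lact X h x) = zet h * xi x)).
Proof.
move=> sV1 sV2 sW sZ cxi ceta cgam czet.
split.
  split; first exact: (rprod_slice sV1 sW).
  split; first exact: (bracket_slice sV1 sV2).
  exact: (lprod_slice sV1 sZ).
split.
  split; first exact: (rprod_uniq sV1 sW).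
  split; first exact: (Cc_rprod sV1 sW cxi cgam).
  exact: (conv_r_val sV1 sW cxi cgam).
split.
  split; first exact: (bracket_uniq sV1).
  split; first exact: (Cc_bracket sV1 sV2 cxi ceta).
  exact: (cinner_val eta sV1 cxi).
split; first exact: (@lprod_uniq _ _ _ V1 _ sZ).
split; first exact: (Cc_lprod sV1 sZ cxi czet).
exact: (conv_l_val xi sZ czet).
Qed.
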